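(* Under the standing setup, there exists a polynomial $p_3(x)$ such that for all sufficiently large $n$, $$\mu\otimes\mu(Q_{n,k})\le p_3(n)\,e^{-2n(h(\mu)-\delta)}\gamma^n.$$
   Context: Standing setup. $\mathcal{A}$ is a finite alphabet, $X\subset\mathcal{A}^{\mathbb{Z}}$ a non-trivial topologically mixing SFT with left shift $\sigma$, $f:X\to\mathbb{R}$ H\''older continuous with pressure $P=P_X(f)$, and $\mu$ the Gibbs measure (unique equilibrium state) of $f$, with entropy $h(\mu)$. $B_m(X)$ is the set of words of length $m$ in $X$; $[w]=\{x\in X:x_0\dots x_{|w|-1}=w\}$, $\mu(w)=\mu([w])$, and $\mu\otimes\mu(S)=\sum_{(u,v)\in S}\mu(u)\mu(v)$. Words are written $u=u_1\dots u_k$, $u_i^j=u_i\dots u_j$. $K>1$ is a constant such that: (i) for all $m\ge1$, $x\in X$: $K^{-1}\le\mu(x_0\dots x_{m-1})/\exp(-Pm+\sum_{i=0}^{m-1}f(\sigma^ix))\le K$; (ii) $\mu(uv)\le K\mu(u)\mu(v)$ and $\mu(\sigma^{-|u|}[v]\mid[u])\le K\mu(v)$ whenever $uv\in B(X)$. $\gamma_0=\inf\{\gamma>0:\exists n_0\ \forall m\ge n_0\ \forall u\in B_m(X),\ \mu(u)\le\gamma^m\}$. Parameters: $\alpha\in(\gamma_0,1]$; $\gamma\in(\gamma_0,\alpha)$; $n_0$ such that $\mu(u)\le\gamma^{|u|}$ for all $u\in B(X)$ with $|u|\ge n_0$; $n\ge n_0$; $0<\delta<\frac14\log(\alpha/\gamma)$;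 $k=k(n)$ with $n/k\to0$ and $k=o(n^2/\log n)$; $\ell=k-n+1$. For a word $u$ of length $\ge n$, $W_n(u)$ is the set of distinct subwords of $u$ of length $n$. $E_n=\{u\in B_n(X):|-\frac1n\log\mu(u)-h(\mu)|<\delta\}$, $G_{n,k}=\{u\in B_k(X): u_1^n=u_\ell^k\text{ and }u_1^n\in E_n\}$, and $Q_{n,k}=\{(u,v)\in G_{n,k}\times G_{n,k}: W_n(u)\cap W_n(v)\neq\emptyset\}$. *)

(* Defs.v *)
From Stdlib Require Import Reals Lra Lia ZArith Arith List.
From Stdlib Require Import ClassicalEpsilon.
Import ListNotations.
Open Scope R_scope.

Definition sumR {B : Type} (l : list B) (F : B -> R) : R :=
  fold_right (fun x acc => F x + acc) 0 l.

Definition ind (P : Prop) : R :=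
  if excluded_middle_informative P then 1 else 0.

(* real polynomial given by its coefficient list [c0; c1; ...] *)
Definition peval (p : list R) (x : R) : R :=
  fold_right (fun c acc => c + x * acc) 0 p.

Definition IsInf (S : R -> Prop) (g : R) : Prop :=
  (forall s, S s -> g <= s) /\ (forall b, (forall s, S s -> b <= s) -> b <= g).

Definition FiniteAlphabet {A : Type} (enumA : list A) : Prop :=
  NoDup enumA /\ forall a, In a enumA.

Fixpoint words {A : Type} (enumA : list A) (m : nat) : list (list A) :=
  match m with
  | O => [nil]
  | S m' => flat_map (fun w => map (fun a => a :: w) enumA) (words enumA m')
  end.

Definition block {A : Type} (x : Z -> A) (i : Z) (m : nat) : list A :=
  map (fun j => x (i + Z.of_nat j)%Z) (seq 0 m).

(* u_{i+1} ... u_{i+n}  (0-based start i, length n) *)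
Definition subw {A : Type} (u : list A) (i n : nat) : list A :=
  firstn n (skipn i u).

Definition SFT {A : Type} (F : list (list A)) (x : Z -> A) : Prop :=
  forall (i : Z) (w : list A), In w F -> block x i (length w) <> w.

Definition inLang {A : Type} (X : (Z -> A) -> Prop) (w : list A) : Prop :=
  exists x, X x /\ block x 0 (length w) = w.

Definition nontrivial {A : Type} (X : (Z -> A) -> Prop) : Prop :=
  exists x y, X x /\ X y /\ x <> y.

Definition top_mixing {A : Type} (X : (Z -> A) -> Prop) : Prop :=
  forall u v, inLang X u -> inLang X v ->
    exists N, forall m, (N <= m)%nat ->
      exists w, length w = m /\ inLang X (u ++ w ++ v).

Definition shiftn {A : Type} (x : Z -> A) (i : nat) : Z -> A :=
  fun j => x (j + Z.of_nat i)%Z.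

(* Hoelder continuity w.r.t. the metric d(x,y) = theta0^{N(x,y)},
   N(x,y) = max{N : x_i = y_i for |i| < N}; any Hoelder exponent is
   absorbed into theta. *)
Definition Holder {A : Type} (X : (Z -> A) -> Prop) (f : (Z -> A) -> R) : Prop :=
  exists C theta, 0 < theta < 1 /\
    forall x y (N : nat), X x -> X y ->
      (forall i, (Z.abs i < Z.of_nat N)%Z -> x i = y i) ->
      Rabs (f x - f y) <= C * theta ^ N.

Definition Sm {A : Type} (f : (Z -> A) -> R) (x : Z -> A) (m : nat) : R :=
  sumR (seq 0 m) (fun i => f (shiftn x i)).

Definition IsPressure {A : Type} (enumA : list A) (X : (Z -> A) -> Prop)
  (f : (Z -> A) -> R) (P : R) : Prop :=
  exists s : list A -> R,
    (forall w, inLang X w ->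
       is_lub (fun t => exists x, X x /\ block x 0 (length w) = w /\
                                  t = Sm f x (length w)) (s w)) /\
    Un_cv (fun m => ln (sumR (words enumA m)
                          (fun w => ind (inLang X w) * exp (s w))) / INR m) P.

(* A shift-invariant Borel probability measure on X, given through its values
   mu w = mu([w]) on cylinders [w] = {x : x_0 ... x_{|w|-1} = w}
   (Kolmogorov consistency + shift invariance + support in X). *)
Definition InvProbOn {A : Type} (enumA : list A) (X : (Z -> A) -> Prop)
  (mu : list A -> R) : Prop :=
  mu nil = 1 /\
  (forall w, 0 <= mu w) /\
  (forall w, mu w = sumR enumA (fun a => mu (w ++ [a]))) /\
  (forall w, mu w = sumR enumA (fun a => mu (a :: w))) /\
  (forall w, ~ inLang X w -> mu w = 0).

(* Kolmogorov--Sinai entropy (the time-zero partition is a generator) *)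
Definition IsEntropy {A : Type} (enumA : list A) (mu : list A -> R) (h : R) : Prop :=
  Un_cv (fun m => - sumR (words enumA m) (fun w => mu w * ln (mu w)) / INR m) h.

Definition GibbsProp {A : Type} (X : (Z -> A) -> Prop) (f : (Z -> A) -> R)
  (P : R) (mu : list A -> R) (K : R) : Prop :=
  forall (m : nat) (x : Z -> A), (1 <= m)%nat -> X x ->
    / K <= mu (block x 0 m) / exp (- P * INR m + Sm f x m) <= K.

Definition QuasiBernoulli {A : Type} (X : (Z -> A) -> Prop)
  (mu : list A -> R) (K : R) : Prop :=
  forall u v, inLang X (u ++ v) ->
    mu (u ++ v) <= K * mu u * mu v /\
    mu (u ++ v) / mu u <= K * mu v.  (* mu(sigma^{-|u|}[v] | [u]) *)

Definition gamma0_def {A : Type} (X : (Z -> A) -> Prop) (mu : list A -> R) (g : R) : Prop :=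
  IsInf (fun g' => 0 < g' /\ exists n0 : nat, forall (m : nat) (u : list A),
            (n0 <= m)%nat -> length u = m -> inLang X u -> mu u <= g' ^ m) g.

Definition En {A : Type} (X : (Z -> A) -> Prop) (mu : list A -> R) (h delta : R)
  (n : nat) (u : list A) : Prop :=
  inLang X u /\ length u = n /\ Rabs (- (1 / INR n) * ln (mu u) - h) < delta.

Definition Gnk {A : Type} (X : (Z -> A) -> Prop) (mu : list A -> R) (h delta : R)
  (n k : nat) (u : list A) : Prop :=
  let l := (k - n + 1)%nat in
  inLang X u /\ length u = k /\
  firstn n u = subw u (l - 1) n /\     (* u_1^n = u_l^k *)
  En X mu h delta n (firstn n u).

Definition share_subword {A : Type} (n : nat) (u v : list A) : Prop :=
  exists i j, (i + n <= length u)%nat /\ (j + n <= length v)%nat /\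
              subw u i n = subw v j n.

Definition Qnk {A : Type} (X : (Z -> A) -> Prop) (mu : list A -> R) (h delta : R)
  (n k : nat) (u v : list A) : Prop :=
  Gnk X mu h delta n k u /\ Gnk X mu h delta n k v /\ share_subword n u v.

Definition mu2 {A : Type} (enumA : list A) (mu : list A -> R) (k : nat)
  (S : list A -> list A -> Prop) : R :=
  sumR (words enumA k) (fun u => sumR (words enumA k) (fun v =>
    ind (S u v) * mu u * mu v)).

(* Main.v *)
Require Import Defs.
From Stdlib Require Import Reals ZArith List.
From Stdlib Require Import Lra Lia Arith ClassicalEpsilon.
Require Import Defs.
Import ListNotations.
Open Scope R_scope.

Lemma sumR_cons {B} (x:B) l F : sumR (x::l) F = F x + sumR l F.
Proof. reflexivity. Qed.

Lemma sumR_app {B} (l1 l2 : list B) F : sumR (l1++l2) F = sumR l1 F + sumR l2 F.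
Proof. induction l1; simpl; [lra|]. unfold sumR in *; simpl. rewrite IHl1; lra. Qed.

Lemma sumR_ext {B} (l : list B) F G : (forall x, In x l -> F x = G x) -> sumR l F = sumR l G.
Proof. induction l; intros H; simpl; auto. unfold sumR in *; simpl.
 rewrite H by (left; auto). rewrite IHl; auto. intros; apply H; right; auto. Qed.

Lemma sumR_le {B} (l : list B) F G : (forall x, In x l -> F x <= G x) -> sumR l F <= sumR l G.
Proof. induction l; intros H; simpl; [lra|]. unfold sumR in *; simpl.
 assert (F a <= G a) by (apply H; left; auto).
 assert (fold_right (fun x acc => F x + acc) 0 l <= fold_right (fun x acc => G x + acc) 0 l)
  by (apply IHl; intros; apply H; right; auto). lra. Qed.

Lemma sumR_nonneg {B} (l : list B) F : (forall x, In x l -> 0 <= F x) -> 0 <= sumR l F.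
Proof. intros H. replace 0 with (sumR l (fun _ => 0)) at 1.
 apply sumR_le; auto. induction l; simpl; auto. unfold sumR in *; simpl. rewrite IHl; [lra|].
 intros; apply H; right; auto. Qed.

Lemma sumR_scal {B} (l : list B) c F : sumR l (fun x => c * F x) = c * sumR l F.
Proof. induction l; simpl; [lra|]. unfold sumR in *; simpl. rewrite IHl; lra. Qed.

Lemma sumR_scalr {B} (l : list B) c F : sumR l (fun x => F x * c) = sumR l F * c.
Proof. rewrite Rmult_comm, <- sumR_scal. apply sumR_ext; intros; lra. Qed.

Lemma sumR_plus {B} (l : list B) F G : sumR l (fun x => F x + G x) = sumR l F + sumR l G.
Proof. induction l; simpl; [lra|]. unfold sumR in *; simpl. rewrite IHl; lra. Qed.

Lemma sumR_zero {B} (l : list B) : sumR l (fun _ => 0) = 0.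
Proof. induction l; simpl; auto. unfold sumR in *; simpl. rewrite IHl; lra. Qed.

Lemma sumR_swap {B C} (l1 : list B) (l2 : list C) F :
  sumR l1 (fun x => sumR l2 (fun y => F x y)) = sumR l2 (fun y => sumR l1 (fun x => F x y)).
Proof. induction l1. simpl. symmetry; apply sumR_zero.
 rewrite sumR_cons, IHl1, <- sumR_plus. apply sumR_ext; intros; reflexivity. Qed.

Lemma sumR_map {B C} (l : list B) (g : B -> C) F : sumR (map g l) F = sumR l (fun x => F (g x)).
Proof. induction l; simpl; auto. unfold sumR in *; simpl. rewrite IHl; auto. Qed.

Lemma sumR_flat_map {B C} (l : list B) (g : B -> list C) F :
  sumR (flat_map g l) F = sumR l (fun x => sumR (g x) F).
Proof. induction l; simpl; auto. rewrite sumR_app, IHl. reflexivity. Qed.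

Lemma sumR_const {B} (l : list B) c : sumR l (fun _ => c) = INR (length l) * c.
Proof. induction l; simpl length; [simpl; lra|]. rewrite sumR_cons, IHl, S_INR. lra. Qed.

Lemma sumR_ge_term {B} (l : list B) F x : In x l -> (forall y, In y l -> 0 <= F y) -> F x <= sumR l F.
Proof. induction l; intros Hin H; [destruct Hin|]. rewrite sumR_cons. destruct Hin as [->|Hin].
 - assert (0 <= sumR l F) by (apply sumR_nonneg; intros; apply H; right; auto). lra.
 - assert (0 <= F a) by (apply H; left; auto). assert (F x <= sumR l F) by (apply IHl; auto; intros; apply H; right; auto). lra.
Qed.

Lemma ind_1 (P : Prop) : P -> ind P = 1.
Proof. intros H; unfold ind; destruct (excluded_middle_informative P); tauto. Qed.
Lemma ind_0 (P : Prop) : ~ P -> ind P = 0.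
Proof. intros H; unfold ind; destruct (excluded_middle_informative P); tauto. Qed.
Lemma ind_ge0 P : 0 <= ind P.
Proof. unfold ind; destruct (excluded_middle_informative P); lra. Qed.
Lemma ind_le1 P : ind P <= 1.
Proof. unfold ind; destruct (excluded_middle_informative P); lra. Qed.

Lemma sum_words_S {A} (enumA : list A) m F : sumR (words enumA (S m)) F =
  sumR (words enumA m) (fun w => sumR enumA (fun c => F (c::w))).
Proof. simpl. rewrite sumR_flat_map. apply sumR_ext; intros. apply sumR_map. Qed.

Lemma words_len {A} (enumA : list A) m w : In w (words enumA m) -> length w = m.
Proof. revert w; induction m; simpl; intros w H.
 - destruct H as [<-|[]]; auto.
 - apply in_flat_map in H. destruct H as [x [Hx H]]. apply in_map_iff in H.
   destruct H as [c [<- _]]. simpl; f_equal; auto. Qed.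

Lemma words_split {A} (enumA : list A) a b F : sumR (words enumA (a+b)) F =
  sumR (words enumA a) (fun x => sumR (words enumA b) (fun y => F (x++y))).
Proof. revert F; induction a; intros F.
 - change (words enumA 0) with [@nil A]. rewrite sumR_cons. simpl (sumR [] _). rewrite Rplus_0_r. reflexivity.
 - simpl plus. rewrite sum_words_S, IHa, sum_words_S. apply sumR_ext; intros x _.
   rewrite sumR_swap. apply sumR_ext; intros; reflexivity. Qed.

Lemma nodup_ind {A} (l : list A) c0 : NoDup l -> sumR l (fun c => ind (c = c0)) <= 1.
Proof. induction 1. simpl; lra. rewrite sumR_cons. destruct (excluded_middle_informative (x = c0)) as [->|Hn].
 - rewrite ind_1 by auto. rewrite (sumR_ext _ _ (fun _ => 0)). rewrite sumR_zero; lra.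
   intros y Hy. apply ind_0. intros ->; tauto.
 - rewrite ind_0 by auto. lra. Qed.

Lemma words_ind_eq {A} (enumA : list A) : NoDup enumA -> forall n t,
  sumR (words enumA n) (fun L => ind (L = t)) <= 1.
Proof. intros Hnd; induction n; intros t.
 - simpl. unfold sumR; simpl. pose proof (ind_le1 (nil = t)); lra.
 - rewrite sum_words_S. destruct t as [|c0 t'].
   + rewrite (sumR_ext _ _ (fun _ => 0)). rewrite sumR_zero; lra.
     intros w _. rewrite (sumR_ext _ _ (fun _ => 0)). apply sumR_zero.
     intros; apply ind_0; discriminate.
   + eapply Rle_trans; [|apply (IHn t')]. apply sumR_le; intros w _.
     rewrite (sumR_ext _ _ (fun c => ind (w = t') * ind (c = c0))).
     rewrite sumR_scal. pose proof (nodup_ind enumA c0 Hnd). pose proof (ind_ge0 (w = t')). nra.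
     intros c _. destruct (excluded_middle_informative (w = t')) as [->|Hn].
     * rewrite (ind_1 (t'=t')) by auto. destruct (excluded_middle_informative (c = c0)) as [->|Hc].
       rewrite !ind_1 by auto; lra. rewrite !ind_0; [lra|auto|]. intros H; injection H; auto.
     * rewrite (ind_0 (w = t')) by auto. rewrite ind_0; [lra|]. intros H; injection H; auto.
Qed.

Lemma words_ind_eq_c {A} (enumA : list A) : NoDup enumA -> forall n t c, 0 <= c ->
  sumR (words enumA n) (fun L => ind (L = t) * c) <= c.
Proof. intros Hnd n t c Hc. rewrite sumR_scalr. pose proof (words_ind_eq enumA Hnd n t).
 pose proof (sumR_nonneg (words enumA n) (fun L => ind (L = t)) (fun _ _ => ind_ge0 _)). nra. Qed.

Lemma mu_nonneg {A} (enumA : list A) X mu : InvProbOn enumA X mu -> forall w, 0 <= mu w.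
Proof. intros H; apply H. Qed.

Lemma sum_right {A} (enumA : list A) X mu : InvProbOn enumA X mu ->
  forall m w, sumR (words enumA m) (fun R => mu (w++R)) = mu w.
Proof. intros [H0 [Hn [Hr [Hl Hz]]]]. induction m; intros w.
 - change (words enumA 0) with [@nil A]. rewrite sumR_cons, app_nil_r. simpl; lra.
 - rewrite sum_words_S, sumR_swap. rewrite (Hr w). apply sumR_ext; intros c _.
   rewrite <- (IHm (w ++ [c])). apply sumR_ext; intros. rewrite <- app_assoc; reflexivity. Qed.

Lemma sum_left {A} (enumA : list A) X mu : InvProbOn enumA X mu ->
  forall m w, sumR (words enumA m) (fun P => mu (P++w)) = mu w.
Proof. intros [H0 [Hn [Hr [Hl Hz]]]]. induction m; intros w.
 - change (words enumA 0) with [@nil A]. rewrite sumR_cons. simpl; lra.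
 - rewrite sum_words_S. rewrite <- (IHm w). apply sumR_ext; intros P _.
   rewrite (Hl (P ++ w)). apply sumR_ext; intros; reflexivity. Qed.

Lemma sum_all {A} (enumA : list A) X mu : InvProbOn enumA X mu ->
  forall m, sumR (words enumA m) mu = 1.
Proof. intros H m. pose proof (sum_left enumA X mu H m nil) as E. destruct H as [H0 _].
 rewrite <- H0, <- E. apply sumR_ext; intros; rewrite app_nil_r; auto. Qed.

Lemma mu_app {A} (enumA : list A) X mu K : InvProbOn enumA X mu -> QuasiBernoulli X mu K -> 0 < K ->
  forall u v, mu (u++v) <= K * mu u * mu v.
Proof. intros Hm HQ HK u v. destruct (excluded_middle_informative (inLang X (u++v))) as [Hi|Hi].
 - apply (HQ u v Hi).
 - destruct Hm as [_ [Hn [_ [_ Hz]]]]. rewrite Hz by auto. pose proof (Hn u); pose proof (Hn v).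
   apply Rmult_le_pos; [apply Rmult_le_pos|]; lra. Qed.

Lemma firstn_app_le {A} (a b : list A) n : (n <= length a)%nat -> firstn n (a++b) = firstn n a.
Proof. intros H. rewrite firstn_app. replace (n - length a)%nat with 0%nat by lia. simpl. apply app_nil_r. Qed.

Lemma subw_app_l {A} (a b : list A) i n : (i + n <= length a)%nat -> subw (a++b) i n = subw a i n.
Proof. intros H. unfold subw. rewrite skipn_app. replace (i - length a)%nat with 0%nat by lia.
 simpl. apply firstn_app_le. rewrite length_skipn. lia. Qed.

Lemma subw_app_r {A} (a b : list A) i n : (length a <= i)%nat -> subw (a++b) i n = subw b (i - length a) n.
Proof. intros H. unfold subw. rewrite skipn_app. rewrite skipn_all2 by lia. reflexivity. Qed.

Lemma subw_full {A} (a b : list A) n : length a = n -> subw (a++b) 0 n = a.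
Proof. intros H. unfold subw. simpl. rewrite firstn_app_le by lia. apply firstn_all2. lia. Qed.

Lemma subw_len {A} (a : list A) i n : (i + n <= length a)%nat -> length (subw a i n) = n.
Proof. intros H. unfold subw. rewrite length_firstn, length_skipn. lia. Qed.

Lemma En_bound {A} (X : (Z -> A) -> Prop) mu h delta n w :
  (forall w, 0 <= mu w) -> (1 <= n)%nat -> En X mu h delta n w -> mu w <= exp (- INR n * (h - delta)).
Proof. intros Hn Hn1 [_ [_ Hab]]. pose proof (Hn w).
 assert (Hpos : 0 < INR n) by (apply lt_0_INR; lia).
 destruct (Req_dec (mu w) 0) as [->|Hz]. { pose proof (exp_pos (- INR n * (h - delta))); lra. }
 assert (0 < mu w) by lra. apply Rabs_def2 in Hab. destruct Hab as [_ Hab].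
 assert (Hl : ln (mu w) < - INR n * (h - delta)).
 { assert (- (1 / INR n) * ln (mu w) > h - delta) by lra.
   assert (INR n * (- (1 / INR n) * ln (mu w)) > INR n * (h - delta)) by (apply Rmult_gt_compat_l; lra).
   replace (INR n * (- (1 / INR n) * ln (mu w))) with (- ln (mu w)) in H2 by (field; lra). lra. }
 rewrite <- (exp_ln (mu w)) by auto. left. apply exp_increasing. auto. Qed.

Lemma POS {A} (enumA : list A) X mu K : InvProbOn enumA X mu -> QuasiBernoulli X mu K -> 0 < K ->
  NoDup enumA ->
  forall m p n s, (p + n <= m)%nat -> length s = n ->
  sumR (words enumA m) (fun W => ind (subw W p n = s) * mu W) <= K * mu s.
Proof. intros Hm HQ HK Hnd m p n s Hpn Hs.
 pose proof (mu_nonneg _ _ _ Hm) as Hn.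
 replace m with (p + (n + (m - p - n)))%nat by lia.
 rewrite words_split.
 eapply Rle_trans with (sumR (words enumA p) (fun P => K * mu s * mu P)).
 2:{ rewrite sumR_scal. rewrite (sum_all enumA X mu Hm). lra. }
 apply sumR_le; intros P HP. apply words_len in HP.
 rewrite words_split.
 eapply Rle_trans with (sumR (words enumA n) (fun s' => ind (s' = s) * (K * mu s * mu P))).
 2:{ apply words_ind_eq_c; auto. pose proof (Hn s); pose proof (Hn P). apply Rmult_le_pos; [apply Rmult_le_pos|]; lra. }
 apply sumR_le; intros s' Hs'. apply words_len in Hs'.
 eapply Rle_trans with (sumR (words enumA (m - p - n)) (fun R => ind (s' = s) * (K * mu P) * mu (s' ++ R))).
 - apply sumR_le; intros R _. rewrite subw_app_r by lia. replace (p - length P)%nat with 0%nat by lia.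
   rewrite subw_full by auto. pose proof (mu_app enumA X mu K Hm HQ HK P (s' ++ R)). pose proof (ind_ge0 (s' = s)). 
   replace (ind (s' = s) * (K * mu P) * mu (s' ++ R)) with (ind (s' = s) * (K * mu P * mu (s' ++ R))) by ring.
   apply Rmult_le_compat_l; auto.
 - rewrite sumR_scal. rewrite (sum_right enumA X mu Hm). destruct (excluded_middle_informative (s' = s)) as [->|Hne].
   + right; ring.
   + rewrite ind_0 by auto. lra.
Qed.

Lemma LemU {A} (enumA : list A) X mu K h delta n k : InvProbOn enumA X mu -> QuasiBernoulli X mu K -> 0 < K ->
  NoDup enumA -> (1 <= n)%nat -> (2 * n <= k)%nat ->
  sumR (words enumA k) (fun u => ind (Gnk X mu h delta n k u) * mu u) <= K * exp (- INR n * (h - delta)).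
Proof. intros Hm HQ HK Hnd Hn1 Hk.
 pose proof (mu_nonneg _ _ _ Hm) as Hn. set (E := exp (- INR n * (h - delta))).
 assert (HE : 0 < E) by apply exp_pos.
 replace k with ((k - n) + n)%nat at 1 by lia. rewrite words_split.
 eapply Rle_trans with (sumR (words enumA (k - n)) (fun x => K * E * mu x)).
 2:{ rewrite sumR_scal, (sum_all enumA X mu Hm). lra. }
 apply sumR_le; intros x Hx. apply words_len in Hx.
 eapply Rle_trans with (sumR (words enumA n) (fun L => ind (L = firstn n x) * (K * E * mu x))).
 2:{ apply words_ind_eq_c; auto. pose proof (Hn x). apply Rmult_le_pos; [apply Rmult_le_pos; lra|auto]. }
 apply sumR_le; intros L HL. apply words_len in HL.
 destruct (excluded_middle_informative (Gnk X mu h delta n k (x ++ L))) as [G|G].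
 - rewrite ind_1 by auto. destruct G as [_ [_ [Heq HEn]]].
   rewrite subw_app_r in Heq by lia. replace (k - n + 1 - 1 - length x)%nat with 0%nat in Heq by lia.
   replace (subw L 0 n) with L in Heq by (rewrite <- (app_nil_r L) at 2; rewrite subw_full; auto).
   rewrite firstn_app_le in Heq, HEn by lia. rewrite ind_1 by congruence.
   pose proof (En_bound X mu h delta n _ Hn Hn1 HEn). fold E in H. rewrite Heq in H.
   pose proof (mu_app enumA X mu K Hm HQ HK x L). pose proof (Hn x).
   assert (K * mu x * mu L <= K * mu x * E) by (apply Rmult_le_compat_l; nra). nra.
 - rewrite ind_0 by auto. pose proof (ind_ge0 (L = firstn n x)). pose proof (Hn x).
   assert (0 <= K * E * mu x) by (apply Rmult_le_pos; nra). nra.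
Qed.

Lemma LemV {A} (enumA : list A) X mu K h delta n k : InvProbOn enumA X mu -> QuasiBernoulli X mu K -> 0 < K ->
  NoDup enumA -> (1 <= n)%nat -> (3 * n <= k)%nat -> forall j s, (j + n <= k)%nat -> length s = n ->
  sumR (words enumA k) (fun v => ind (Gnk X mu h delta n k v) * (ind (subw v j n = s) * mu v))
   <= K * exp (- INR n * (h - delta)) * (K * mu s).
Proof. intros Hm HQ HK Hnd Hn1 Hk j s Hj Hs.
 pose proof (mu_nonneg _ _ _ Hm) as Hn. set (E := exp (- INR n * (h - delta))).
 assert (HE : 0 < E) by apply exp_pos.
 destruct (le_lt_dec (j + n) (k - n)) as [Hc|Hc].
 - replace k with ((k - n) + n)%nat at 1 by lia. rewrite words_split.
   eapply Rle_trans with (sumR (words enumA (k - n)) (fun Y => K * E * (ind (subw Y j n = s) * mu Y))).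
   2:{ rewrite sumR_scal. apply Rmult_le_compat_l. nra. apply (POS enumA X mu K); auto. }
   apply sumR_le; intros Y HY. apply words_len in HY.
   eapply Rle_trans with (sumR (words enumA n) (fun L => ind (L = firstn n Y) * (K * E * (ind (subw Y j n = s) * mu Y)))).
   2:{ apply words_ind_eq_c; auto. pose proof (Hn Y). pose proof (ind_ge0 (subw Y j n = s)).
       apply Rmult_le_pos; [nra|]. nra. }
   apply sumR_le; intros L HL. apply words_len in HL.
   rewrite subw_app_l by lia.
   destruct (excluded_middle_informative (Gnk X mu h delta n k (Y ++ L))) as [G|G].
   + rewrite (ind_1 (Gnk _ _ _ _ _ _ _)) by auto. destruct G as [_ [_ [Heq HEn]]].
     rewrite subw_app_r in Heq by lia. replace (k - n + 1 - 1 - length Y)%nat with 0%nat in Heq by lia.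
     replace (subw L 0 n) with L in Heq by (rewrite <- (app_nil_r L) at 2; rewrite subw_full; auto).
     rewrite firstn_app_le in Heq, HEn by lia. rewrite (ind_1 (L = _)) by congruence.
     pose proof (En_bound X mu h delta n _ Hn Hn1 HEn). fold E in H. rewrite Heq in H.
     pose proof (mu_app enumA X mu K Hm HQ HK Y L). pose proof (Hn Y). pose proof (ind_ge0 (subw Y j n = s)).
     assert (K * mu Y * mu L <= K * mu Y * E) by (apply Rmult_le_compat_l; nra).
     assert (mu (Y ++ L) <= K * E * mu Y) by nra.
     assert (ind (subw Y j n = s) * mu (Y ++ L) <= ind (subw Y j n = s) * (K * E * mu Y)) by (apply Rmult_le_compat_l; auto).
     nra.
   + rewrite ind_0 by auto. pose proof (ind_ge0 (L = firstn n Y)). pose proof (Hn Y). pose proof (ind_ge0 (subw Y j n = s)).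
     assert (0 <= K * E * (ind (subw Y j n = s) * mu Y)) by (apply Rmult_le_pos; nra). nra.
 - replace k with (n + (k - n))%nat at 1 by lia. rewrite words_split, sumR_swap.
   eapply Rle_trans with (sumR (words enumA (k - n)) (fun W => K * E * (ind (subw W (j - n) n = s) * mu W))).
   2:{ rewrite sumR_scal. apply Rmult_le_compat_l. nra. apply (POS enumA X mu K); auto. lia. }
   apply sumR_le; intros W HW. apply words_len in HW.
   eapply Rle_trans with (sumR (words enumA n) (fun F => ind (F = subw W (k - n + 1 - 1 - n) n) * (K * E * (ind (subw W (j - n) n = s) * mu W)))).
   2:{ apply words_ind_eq_c; auto. pose proof (Hn W). pose proof (ind_ge0 (subw W (j - n) n = s)).
       apply Rmult_le_pos; [nra|]. nra. }
   apply sumR_le; intros F HF. apply words_len in HF.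
   rewrite subw_app_r by lia. rewrite HF.
   destruct (excluded_middle_informative (Gnk X mu h delta n k (F ++ W))) as [G|G].
   + rewrite (ind_1 (Gnk _ _ _ _ _ _ _)) by auto. destruct G as [_ [_ [Heq HEn]]].
     rewrite subw_app_r in Heq by lia. rewrite HF in Heq.
     assert (HFF : firstn n (F ++ W) = F) by (rewrite firstn_app_le by lia; apply firstn_all2; lia).
     rewrite HFF in Heq, HEn. rewrite (ind_1 (F = _)) by congruence.
     pose proof (En_bound X mu h delta n _ Hn Hn1 HEn). fold E in H.
     pose proof (mu_app enumA X mu K Hm HQ HK F W). pose proof (Hn W). pose proof (ind_ge0 (subw W (j - n) n = s)).
     assert (K * mu F * mu W <= K * E * mu W) by (apply Rmult_le_compat_r; nra).
     assert (mu (F ++ W) <= K * E * mu W) by nra.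
     assert (ind (subw W (j - n) n = s) * mu (F ++ W) <= ind (subw W (j - n) n = s) * (K * E * mu W)) by (apply Rmult_le_compat_l; auto).
     nra.
   + rewrite ind_0 by auto. pose proof (ind_ge0 (F = subw W (k - n + 1 - 1 - n) n)). pose proof (Hn W). pose proof (ind_ge0 (subw W (j - n) n = s)).
     assert (0 <= K * E * (ind (subw W (j - n) n = s) * mu W)) by (apply Rmult_le_pos; nra). nra.
Qed.

Lemma core {A} (enumA : list A) X mu K h delta gamma n0 n kk :
  InvProbOn enumA X mu -> QuasiBernoulli X mu K -> 0 < K -> NoDup enumA -> 0 < gamma ->
  (forall u, inLang X u -> (n0 <= length u)%nat -> mu u <= gamma ^ length u) ->
  (1 <= n)%nat -> (n0 <= n)%nat -> (3 * n <= kk)%nat ->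
  mu2 enumA mu kk (Qnk X mu h delta n kk) <=
   INR kk * INR kk * (K * exp (- INR n * (h - delta)) * (K * exp (- INR n * (h - delta)) * (K * gamma ^ n))).
Proof. intros Hm HQ HK Hnd Hg Hn0 Hn1 Hnn0 Hk.
 pose proof (mu_nonneg _ _ _ Hm) as Hn. set (E := exp (- INR n * (h - delta))).
 assert (HE : 0 < E) by apply exp_pos.
 assert (Hgn : 0 < gamma ^ n) by (apply pow_lt; auto).
 set (G := Gnk X mu h delta n kk).
 set (T := fun i j u v => ind (G u) * mu u * ind (i + n <= kk)%nat * ind (j + n <= kk)%nat *
            (ind (G v) * (ind (subw v j n = subw u i n) * mu v))).
 assert (Tpos : forall i j u v, 0 <= T i j u v).
 { intros. unfold T. pose proof (ind_ge0 (G u)); pose proof (ind_ge0 (G v)); pose proof (ind_ge0 (i + n <= kk)%nat);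
   pose proof (ind_ge0 (j + n <= kk)%nat); pose proof (ind_ge0 (subw v j n = subw u i n)); pose proof (Hn u); pose proof (Hn v).
   repeat apply Rmult_le_pos; auto. }
 unfold mu2.
 eapply Rle_trans with (sumR (words enumA kk) (fun u => sumR (words enumA kk) (fun v =>
     sumR (seq 0 kk) (fun i => sumR (seq 0 kk) (fun j => T i j u v))))).
 { apply sumR_le; intros u Hu; apply sumR_le; intros v Hv. apply words_len in Hu, Hv.
   destruct (excluded_middle_informative (Qnk X mu h delta n kk u v)) as [Q|Q].
   - rewrite ind_1 by auto. destruct Q as [Gu [Gv [i [j [Hi [Hj Hs]]]]]].
     assert (Ti : T i j u v = mu u * mu v).
     { unfold T. rewrite (ind_1 (G u)), (ind_1 (G v)), (ind_1 (i+n<=kk)%nat), (ind_1 (j+n<=kk)%nat), (ind_1 (subw v j n = subw u i n)); try ring; auto; try lia; congruence. }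
     rewrite Rmult_1_l, <- Ti. eapply Rle_trans; [|apply (sumR_ge_term _ _ i)].
     + apply (sumR_ge_term _ (fun j => T i j u v) j). apply in_seq; lia. intros; auto.
     + apply in_seq; lia.
     + intros; apply sumR_nonneg; intros; auto.
   - rewrite ind_0 by auto. rewrite !Rmult_0_l. apply sumR_nonneg; intros; apply sumR_nonneg; intros; auto. }
 rewrite (sumR_ext _ _ (fun u => sumR (seq 0 kk) (fun i => sumR (seq 0 kk) (fun j =>
               sumR (words enumA kk) (fun v => T i j u v))))).
 2:{ intros u _. rewrite sumR_swap. apply sumR_ext; intros i _. apply sumR_swap. }
 rewrite sumR_swap. rewrite (sumR_ext _ _ (fun i => sumR (seq 0 kk) (fun j => sumR (words enumA kk) (fun u =>
               sumR (words enumA kk) (fun v => T i j u v))))).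
 2:{ intros i _. apply sumR_swap. }
 set (C := K * E * (K * E * (K * gamma ^ n))).
 eapply Rle_trans with (sumR (seq 0 kk) (fun i => sumR (seq 0 kk) (fun j => C))).
 2:{ rewrite sumR_const, sumR_const, length_seq. right; ring. }
 apply sumR_le; intros i _; apply sumR_le; intros j _.
 eapply Rle_trans with (sumR (words enumA kk) (fun u => ind (G u) * mu u * (K * E * (K * gamma ^ n)))).
 2:{ unfold C. rewrite sumR_scalr. apply Rmult_le_compat_r.
     - repeat apply Rmult_le_pos; lra.
     - apply (LemU enumA X mu K h delta n kk); auto; lia. }
 apply sumR_le; intros u Hu. apply words_len in Hu.
 unfold T. rewrite sumR_scal.
 pose proof (ind_ge0 (G u)). pose proof (Hn u).
 destruct (le_lt_dec (i + n) kk) as [Hi|Hi]; [destruct (le_lt_dec (j + n) kk) as [Hj|Hj]|].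
 - rewrite !(ind_1 (_ <= kk)%nat) by lia. rewrite !Rmult_1_r.
   apply Rmult_le_compat_l; [nra|].
   eapply Rle_trans. apply (LemV enumA X mu K h delta n kk); auto; try lia. apply subw_len; lia.
   fold E. apply Rmult_le_compat_l; [nra|]. apply Rmult_le_compat_l; [lra|].
   set (s := subw u i n). assert (Hsl : length s = n) by (apply subw_len; lia).
   destruct (excluded_middle_informative (inLang X s)) as [Hl|Hl].
   + rewrite <- Hsl. apply Hn0; auto; lia.
   + destruct Hm as [_ [_ [_ [_ Hz]]]]. rewrite Hz by auto. lra.
 - rewrite (ind_0 (j + n <= kk)%nat) by lia. rewrite Rmult_0_r, Rmult_0_l. repeat apply Rmult_le_pos; lra.
 - rewrite (ind_0 (i + n <= kk)%nat) by lia. rewrite Rmult_0_r, !Rmult_0_l. repeat apply Rmult_le_pos; lra.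
Qed.

Lemma div_nonneg (a b : R) : 0 <= a -> 0 < b -> 0 <= a / b.
Proof. intros. unfold Rdiv. apply Rmult_le_pos; auto. left; apply Rinv_0_lt_compat; auto. Qed.

Theorem mainTheorem9
  (A : Type) (enumA : list A) (HA : FiniteAlphabet enumA)
  (F : list (list A))
  (Hnontriv : nontrivial (SFT F)) (Hmix : top_mixing (SFT F))
  (f : (Z -> A) -> R) (Hf : Holder (SFT F) f)
  (P : R) (HP : IsPressure enumA (SFT F) f P)
  (mu : list A -> R) (Hmu : InvProbOn enumA (SFT F) mu)
  (h : R) (Hh : IsEntropy enumA mu h)
  (K : R) (HK : 1 < K)
  (Hi : GibbsProp (SFT F) f P mu K)
  (Hii : QuasiBernoulli (SFT F) mu K)
  (gamma0 : R) (Hg0 : gamma0_def (SFT F) mu gamma0)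
  (alpha gamma : R) (Halpha : gamma0 < alpha <= 1)
  (Hgamma : gamma0 < gamma < alpha)
  (n0 : nat)
  (Hn0 : forall u, inLang (SFT F) u -> (n0 <= length u)%nat ->
                   mu u <= gamma ^ length u)
  (delta : R) (Hdelta : 0 < delta < / 4 * ln (alpha / gamma))
  (k : nat -> nat)
  (Hk1 : Un_cv (fun n => INR n / INR (k n)) 0)
  (Hk2 : Un_cv (fun n => INR (k n) * ln (INR n) / INR n ^ 2) 0) :
  exists (p3 : list R) (N : nat), forall n : nat, (N <= n)%nat ->
    mu2 enumA mu (k n) (Qnk (SFT F) mu h delta n (k n))
      <= peval p3 (INR n) * exp (- 2 * INR n * (h - delta)) * gamma ^ n.
Proof.
  destruct HA as [Hnd _]. assert (HK0 : 0 < K) by lra.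
  assert (Hg0' : 0 <= gamma0).
  { destruct Hg0 as [_ Hglb]. apply Hglb. intros s [Hs _]. lra. }
  assert (Hg : 0 < gamma) by lra.
  destruct (Hk1 (/ 3)) as [N1 HN1]; [lra|].
  destruct (Hk2 1) as [N2 HN2]; [lra|].
  exists [0; 0; 0; 0; K * K * K], (Nat.max n0 (Nat.max 3 (Nat.max N1 N2))).
  intros n Hn.
  assert (Hn3 : (3 <= n)%nat) by lia.
  assert (HnR : 3 <= INR n) by (replace 3 with (INR 3) by (simpl; lra); apply le_INR; auto).
  assert (Hpe : peval [0; 0; 0; 0; K * K * K] (INR n) = INR n * INR n * (INR n * INR n) * (K * K * K))
    by (simpl; ring).
  rewrite Hpe.
  assert (Hgn : 0 < gamma ^ n) by (apply pow_lt; auto).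
  assert (Hex : exp (- 2 * INR n * (h - delta)) = exp (- INR n * (h - delta)) * exp (- INR n * (h - delta))).
  { rewrite <- exp_plus. f_equal. ring. }
  pose proof (exp_pos (- INR n * (h - delta))) as HE.
  set (kk := k n) in *.
  destruct (Nat.eq_dec kk 0) as [Hk0|Hk0].
  - unfold mu2. rewrite Hk0. simpl words. rewrite !sumR_cons. simpl sumR.
    rewrite ind_0. 
    + rewrite Hex. assert (0 <= INR n * INR n * (INR n * INR n) * (K * K * K)).
      { assert (0 <= INR n) by lra. repeat apply Rmult_le_pos; lra. }
      assert (0 <= exp (- INR n * (h - delta)) * exp (- INR n * (h - delta))) by nra.
      apply Rle_trans with 0; [right; ring|]. apply Rmult_le_pos; [apply Rmult_le_pos|]; lra.
    + intros [[_ [_ [_ [_ [Hl _]]]]] _]. rewrite firstn_nil in Hl. simpl in Hl. lia.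
  - assert (Hkk : (3 * n <= kk)%nat).
    { specialize (HN1 n ltac:(lia)). unfold R_dist in HN1. cbv beta in HN1. fold kk in HN1. rewrite Rminus_0_r in HN1.
      assert (Hkp : 0 < INR kk) by (apply lt_0_INR; lia).
      assert (0 <= INR n / INR kk) by (apply div_nonneg; [apply pos_INR|lra]).
      rewrite Rabs_right in HN1 by lra.
      assert (INR n < INR kk / 3).
      { apply (Rmult_lt_compat_r (INR kk)) in HN1; auto. unfold Rdiv in HN1.
        rewrite Rmult_assoc, Rinv_l in HN1 by lra. lra. }
      assert (INR (3 * n) <= INR kk) by (rewrite mult_INR; simpl; lra).
      apply INR_le; auto. }
    assert (Hkn : INR kk <= INR n * INR n).
    { specialize (HN2 n ltac:(lia)). unfold R_dist in HN2. cbv beta in HN2. fold kk in HN2. rewrite Rminus_0_r in HN2.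
      assert (Hln : 1 <= ln (INR n)).
      { rewrite <- (ln_exp 1) at 1. pose proof exp_le_3. destruct (Rle_lt_or_eq_dec (exp 1) (INR n)) as [Hlt|Heq]; [lra| |].
        - left; apply ln_increasing; [apply exp_pos|auto].
        - rewrite Heq; lra. }
      assert (Hk0' : 0 <= INR kk) by apply pos_INR.
      assert (Hn2 : 0 < INR n ^ 2) by (apply pow_lt; lra).
      assert (0 <= INR kk * ln (INR n) / INR n ^ 2) by (apply div_nonneg; nra).
      rewrite Rabs_right in HN2 by lra.
      apply (Rmult_lt_compat_r (INR n ^ 2)) in HN2; auto. unfold Rdiv in HN2.
      rewrite Rmult_assoc, Rinv_l in HN2 by lra. simpl in HN2. nra. }
    eapply Rle_trans.
    + apply (core enumA (SFT F) mu K h delta gamma n0 n kk); auto; lia.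
    + rewrite Hex. set (E := exp (- INR n * (h - delta))) in *.
      assert (0 <= INR kk) by apply pos_INR.
      assert (0 <= K * E * (K * E * (K * gamma ^ n))) by (repeat apply Rmult_le_pos; lra).
      assert (INR kk * INR kk <= INR n * INR n * (INR n * INR n)) by (apply Rmult_le_compat; lra).
      apply Rle_trans with (INR n * INR n * (INR n * INR n) * (K * E * (K * E * (K * gamma ^ n)))).
      * apply Rmult_le_compat_r; auto.
      * right; ring.
Qed.
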